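(* Let $\mathcal{L}$ and $\mathcal{K}$ be $2$-categories with pseudolimits of arrows, and let $U\colon\mathcal{L}\to\mathcal{K}$ be a $2$-functor preserving pseudolimits of arrows. Then $U$ preserves equivalences, injective equivalences, retract equivalences, normal retract equivalences, representable isofibrations, and normal isofibrations.
   Context: An equivalence is a morphism $f\colon A\to B$ with $g\colon B\to A$ and invertible $2$-cells $1\cong gf$, $fg\cong 1$; an injective equivalence is an equivalence with a retraction; a retract equivalence is an equivalence with a section; a normal retract equivalence is a retract equivalence which is also a normal isofibration. The pseudolimit of an arrow $f\colon A\to B$ is an object $L_f$ with $u_f\colon L_f\to A$, $v_f\colon L_f\to B$ and invertible $\lambda_f\colon v_f\cong fu_f$, universal among such data; $U$ preserves it if $(UL_f,Uu_f,Uv_f,U\lambda_f)$ is a pseudolimit of $Uf$. A morphism $f\colon A\to B$ is a representable isofibration if for every object $X$, given $g\colon X\to A$, $h\colon X\to B$ and invertible $\alpha\colon fg\cong h$, there exist $h'\colon X\to A$ and invertible $\alpha'\colon g\cong h'$ with $f\alpha'=\alpha$. A cleavage is a choice of such $(\alpha',h')$ for every $(g,\alpha,h)$, natural in $X$; it is normal if $\alpha'$ is an identity whenever $\alpha$ is. A normal isofibration is a representable isofibration admitting a normal cleavage. *)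

(* Defs.v *)
(* A 2-category is presented "globularly": for each
   pair of objects a type of 1-cells and a type of 2-cells, with source and
   target maps from 2-cells to 1-cells.  Vertical composition is a total
   operation whose laws are only required on composable pairs. *)

Set Implicit Arguments.
Unset Strict Implicit.

Record TwoCatData := {
  ob : Type;
  hom : ob -> ob -> Type;
  cell : ob -> ob -> Type;
  src : forall A B, cell A B -> hom A B;
  tgt : forall A B, cell A B -> hom A B;
  id1 : forall A, hom A A;
  comp1 : forall A B C, hom B C -> hom A B -> hom A C;   (* comp1 g f = g o f *)
  id2 : forall A B, hom A B -> cell A B;
  vcomp : forall A B, cell A B -> cell A B -> cell A B;  (* vcomp b a = b . a *)
  hcomp : forall A B C, cell B C -> cell A B -> cell A C (* hcomp b a = b * a *)
}.

Arguments hom {_} _ _.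
Arguments cell {_} _ _.
Arguments src {_ _ _} _.
Arguments tgt {_ _ _} _.
Arguments id1 {_} _.
Arguments comp1 {_ _ _ _} _ _.
Arguments id2 {_ _ _} _.
Arguments vcomp {_ _ _} _ _.
Arguments hcomp {_ _ _ _} _ _.

Record IsTwoCat (C : TwoCatData) : Prop := {
  src_id2 : forall (A B : ob C) (f : hom A B), src (id2 f) = f;
  tgt_id2 : forall (A B : ob C) (f : hom A B), tgt (id2 f) = f;
  src_vcomp : forall (A B : ob C) (a b : cell A B),
      tgt a = src b -> src (vcomp b a) = src a;
  tgt_vcomp : forall (A B : ob C) (a b : cell A B),
      tgt a = src b -> tgt (vcomp b a) = tgt b;
  src_hcomp : forall (A B D : ob C) (b : cell B D) (a : cell A B),
      src (hcomp b a) = comp1 (src b) (src a);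
  tgt_hcomp : forall (A B D : ob C) (b : cell B D) (a : cell A B),
      tgt (hcomp b a) = comp1 (tgt b) (tgt a);
  comp1_assoc : forall (A B D E : ob C) (h : hom D E) (g : hom B D) (f : hom A B),
      comp1 h (comp1 g f) = comp1 (comp1 h g) f;
  comp1_id_l : forall (A B : ob C) (f : hom A B), comp1 (id1 B) f = f;
  comp1_id_r : forall (A B : ob C) (f : hom A B), comp1 f (id1 A) = f;
  vcomp_id_l : forall (A B : ob C) (a : cell A B), vcomp (id2 (tgt a)) a = a;
  vcomp_id_r : forall (A B : ob C) (a : cell A B), vcomp a (id2 (src a)) = a;
  vcomp_assoc : forall (A B : ob C) (a b c : cell A B),
      tgt a = src b -> tgt b = src c -> vcomp c (vcomp b a) = vcomp (vcomp c b) a;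
  hcomp_assoc : forall (A B D E : ob C) (c : cell D E) (b : cell B D) (a : cell A B),
      hcomp c (hcomp b a) = hcomp (hcomp c b) a;
  hcomp_id_l : forall (A B : ob C) (a : cell A B), hcomp (id2 (id1 B)) a = a;
  hcomp_id_r : forall (A B : ob C) (a : cell A B), hcomp a (id2 (id1 A)) = a;
  hcomp_id2 : forall (A B D : ob C) (g : hom B D) (f : hom A B),
      hcomp (id2 g) (id2 f) = id2 (comp1 g f);
  interchange : forall (A B D : ob C) (a a' : cell A B) (b b' : cell B D),
      tgt a = src a' -> tgt b = src b' ->
      hcomp (vcomp b' b) (vcomp a' a) = vcomp (hcomp b' a') (hcomp b a)
}.

Record TwoCat := { tc_data :> TwoCatData; tc_axioms : IsTwoCat tc_data }.

Record TwoFunctorData (C D : TwoCatData) := {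
  F0 : ob C -> ob D;
  F1 : forall A B : ob C, hom A B -> hom (F0 A) (F0 B);
  F2 : forall A B : ob C, cell A B -> cell (F0 A) (F0 B)
}.
Arguments F0 {_ _} _ _.
Arguments F1 {_ _} _ {_ _} _.
Arguments F2 {_ _} _ {_ _} _.

Record IsTwoFunctor (C D : TwoCatData) (U : TwoFunctorData C D) : Prop := {
  F1_id : forall A : ob C, F1 U (id1 A) = id1 (F0 U A);
  F1_comp : forall (A B E : ob C) (g : hom B E) (f : hom A B),
      F1 U (comp1 g f) = comp1 (F1 U g) (F1 U f);
  F2_src : forall (A B : ob C) (a : cell A B), src (F2 U a) = F1 U (src a);
  F2_tgt : forall (A B : ob C) (a : cell A B), tgt (F2 U a) = F1 U (tgt a);
  F2_id : forall (A B : ob C) (f : hom A B), F2 U (id2 f) = id2 (F1 U f);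
  F2_vcomp : forall (A B : ob C) (a b : cell A B),
      tgt a = src b -> F2 U (vcomp b a) = vcomp (F2 U b) (F2 U a);
  F2_hcomp : forall (A B E : ob C) (b : cell B E) (a : cell A B),
      F2 U (hcomp b a) = hcomp (F2 U b) (F2 U a)
}.

Record TwoFunctor (C D : TwoCat) :=
  { tf_data :> TwoFunctorData C D; tf_axioms : IsTwoFunctor tf_data }.

Section Notions.
Variable C : TwoCatData.

Definition is_cell {A B : ob C} (a : cell A B) (f g : hom A B) : Prop :=
  src a = f /\ tgt a = g.

Definition invertible {A B : ob C} (a : cell A B) : Prop :=
  exists b : cell A B, src b = tgt a /\ tgt b = src a /\
    vcomp b a = id2 (src a) /\ vcomp a b = id2 (tgt a).

Definition whiskerL {A B D : ob C} (f : hom B D) (a : cell A B) : cell A D :=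
  hcomp (id2 f) a.
Definition whiskerR {A B D : ob C} (a : cell B D) (k : hom A B) : cell A D :=
  hcomp a (id2 k).

Definition equivalence {A B : ob C} (f : hom A B) : Prop :=
  exists (g : hom B A) (eta : cell A A) (eps : cell B B),
    is_cell eta (id1 A) (comp1 g f) /\ invertible eta /\
    is_cell eps (comp1 f g) (id1 B) /\ invertible eps.

Definition has_retraction {A B : ob C} (f : hom A B) : Prop :=
  exists r : hom B A, comp1 r f = id1 A.

Definition has_section {A B : ob C} (f : hom A B) : Prop :=
  exists s : hom B A, comp1 f s = id1 B.

Definition injective_equivalence {A B : ob C} (f : hom A B) : Prop :=
  equivalence f /\ has_retraction f.

Definition retract_equivalence {A B : ob C} (f : hom A B) : Prop :=
  equivalence f /\ has_section f.

Definition representable_isofibration {A B : ob C} (f : hom A B) : Prop :=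
  forall (X : ob C) (g : hom X A) (h : hom X B) (a : cell X B),
    is_cell a (comp1 f g) h -> invertible a ->
    exists (h' : hom X A) (a' : cell X A),
      is_cell a' g h' /\ invertible a' /\ whiskerL f a' = a.

(* A cleavage: a choice of lift  L g a  (its target is h'), for every
   (g, a) with a : f g ~= h invertible; the values of L on other inputs
   are irrelevant. *)
Definition lift_choice (A B : ob C) :=
  forall X : ob C, hom X A -> cell X B -> cell X A.

Definition is_cleavage {A B : ob C} (f : hom A B) (L : lift_choice A B) : Prop :=
  (forall (X : ob C) (g : hom X A) (a : cell X B),
     src a = comp1 f g -> invertible a ->
     src (L X g a) = g /\ invertible (L X g a) /\ whiskerL f (L X g a) = a) /\
  (forall (Y X : ob C) (k : hom Y X) (g : hom X A) (a : cell X B),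
     src a = comp1 f g -> invertible a ->
     L Y (comp1 g k) (whiskerR a k) = whiskerR (L X g a) k).

Definition is_normal_cleavage {A B : ob C} (f : hom A B) (L : lift_choice A B) : Prop :=
  is_cleavage f L /\
  (forall (X : ob C) (g : hom X A) (h : hom X B),
     is_cell (id2 h) (comp1 f g) h -> L X g (id2 h) = id2 g).

Definition normal_isofibration {A B : ob C} (f : hom A B) : Prop :=
  representable_isofibration f /\ exists L : lift_choice A B, is_normal_cleavage f L.

Definition normal_retract_equivalence {A B : ob C} (f : hom A B) : Prop :=
  retract_equivalence f /\ normal_isofibration f.

(* Pseudolimit of an arrow f : A -> B: (L, u, v, lam : v ~= f u) such that
   for every X, composition with the universal cone is an isomorphism between
   hom(X, L) and the category of pseudo-cones (p, q, mu : q ~= f p) over X. *)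
Definition is_pseudolimit {A B : ob C} (f : hom A B)
    (L : ob C) (u : hom L A) (v : hom L B) (lam : cell L B) : Prop :=
  is_cell lam v (comp1 f u) /\ invertible lam /\
  (forall (X : ob C) (p : hom X A) (q : hom X B) (mu : cell X B),
     is_cell mu q (comp1 f p) -> invertible mu ->
     exists m : hom X L,
       (comp1 u m = p /\ comp1 v m = q /\ whiskerR lam m = mu) /\
       forall m' : hom X L,
         comp1 u m' = p -> comp1 v m' = q -> whiskerR lam m' = mu -> m' = m) /\
  (forall (X : ob C) (m m' : hom X L) (s : cell X A) (t : cell X B),
     is_cell s (comp1 u m) (comp1 u m') -> is_cell t (comp1 v m) (comp1 v m') ->
     vcomp (whiskerL f s) (whiskerR lam m) = vcomp (whiskerR lam m') t ->
     exists th : cell X L,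
       (is_cell th m m' /\ whiskerL u th = s /\ whiskerL v th = t) /\
       forall th' : cell X L,
         is_cell th' m m' -> whiskerL u th' = s -> whiskerL v th' = t -> th' = th).

Definition has_pseudolimits_of_arrows : Prop :=
  forall (A B : ob C) (f : hom A B),
    exists (L : ob C) (u : hom L A) (v : hom L B) (lam : cell L B),
      is_pseudolimit f u v lam.

End Notions.

Arguments is_pseudolimit {C A B} f {L} u v lam.

Definition preserves_pseudolimits_of_arrows {C D : TwoCatData}
    (U : TwoFunctorData C D) : Prop :=
  forall (A B : ob C) (f : hom A B) (L : ob C) (u : hom L A) (v : hom L B)
         (lam : cell L B),
    is_pseudolimit f u v lam ->
    is_pseudolimit (F1 U f) (F1 U u) (F1 U v) (F2 U lam).

(* Main.v *)
Require Import Defs.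
From Stdlib Require Import ClassicalEpsilon.
Set Implicit Arguments.
Unset Strict Implicit.

Section Gen.
Variable C : TwoCatData.
Hypothesis HC : IsTwoCat C.

Definition is_inv {A B : ob C} (a b : cell A B) : Prop :=
  src b = tgt a /\ tgt b = src a /\ vcomp b a = id2 (src a) /\ vcomp a b = id2 (tgt a).

Lemma inv_sym {A B : ob C} (a b : cell A B) : is_inv a b -> is_inv b a.
Proof. intros [h1 [h2 [h3 h4]]]. repeat split; auto.
  rewrite h1; exact h4. rewrite h2; exact h3. Qed.

Lemma inv_unique {A B : ob C} (a b b' : cell A B) : is_inv a b -> is_inv a b' -> b = b'.
Proof. intros [h1 [h2 [h3 h4]]] [k1 [k2 [k3 k4]]].
  transitivity (vcomp b (id2 (src b))). symmetry; apply (vcomp_id_r HC).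
  rewrite h1, <- k4. rewrite (vcomp_assoc HC) by congruence.
  rewrite h3, <- k2. apply (vcomp_id_l HC). Qed.

Lemma vid {A B : ob C} (f : hom A B) : vcomp (id2 f) (id2 f) = id2 f.
Proof. pose proof (vcomp_id_l HC (id2 f)) as H. rewrite (tgt_id2 HC) in H. exact H. Qed.

Lemma id_inv {A B : ob C} (f : hom A B) : is_inv (id2 f) (id2 f).
Proof. unfold is_inv. rewrite (src_id2 HC), (tgt_id2 HC), vid. auto. Qed.

Lemma wR_src {A B D : ob C} (a : cell B D) (k : hom A B) : src (whiskerR a k) = comp1 (src a) k.
Proof. unfold whiskerR. rewrite (src_hcomp HC), (src_id2 HC). reflexivity. Qed.
Lemma wR_tgt {A B D : ob C} (a : cell B D) (k : hom A B) : tgt (whiskerR a k) = comp1 (tgt a) k.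
Proof. unfold whiskerR. rewrite (tgt_hcomp HC), (tgt_id2 HC). reflexivity. Qed.
Lemma wL_src {A B D : ob C} (f : hom B D) (a : cell A B) : src (whiskerL f a) = comp1 f (src a).
Proof. unfold whiskerL. rewrite (src_hcomp HC), (src_id2 HC). reflexivity. Qed.
Lemma wL_tgt {A B D : ob C} (f : hom B D) (a : cell A B) : tgt (whiskerL f a) = comp1 f (tgt a).
Proof. unfold whiskerL. rewrite (tgt_hcomp HC), (tgt_id2 HC). reflexivity. Qed.

Lemma wR_inv {A B D : ob C} (a b : cell B D) (k : hom A B) :
  is_inv a b -> is_inv (whiskerR a k) (whiskerR b k).
Proof. intros [h1 [h2 [h3 h4]]]. unfold is_inv.
  rewrite !wR_src, !wR_tgt, h1, h2. repeat split; unfold whiskerR;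
  rewrite <- (interchange HC) by (rewrite ?(src_id2 HC), ?(tgt_id2 HC); congruence);
  rewrite vid, ?h3, ?h4, (hcomp_id2 HC); reflexivity. Qed.

Lemma wL_inv {A B D : ob C} (f : hom B D) (a b : cell A B) :
  is_inv a b -> is_inv (whiskerL f a) (whiskerL f b).
Proof. intros [h1 [h2 [h3 h4]]]. unfold is_inv.
  rewrite !wL_src, !wL_tgt, h1, h2. repeat split; unfold whiskerL;
  rewrite <- (interchange HC) by (rewrite ?(src_id2 HC), ?(tgt_id2 HC); congruence);
  rewrite vid, ?h3, ?h4, (hcomp_id2 HC); reflexivity. Qed.

Lemma wR_wR {A B D E : ob C} (a : cell D E) (m : hom B D) (k : hom A B) :
  whiskerR (whiskerR a m) k = whiskerR a (comp1 m k).
Proof. unfold whiskerR. rewrite <- (hcomp_assoc HC), (hcomp_id2 HC). reflexivity. Qed.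

Lemma wL_wR {A B D E : ob C} (f : hom D E) (a : cell B D) (m : hom A B) :
  whiskerL f (whiskerR a m) = whiskerR (whiskerL f a) m.
Proof. unfold whiskerR, whiskerL. apply (hcomp_assoc HC). Qed.

Lemma wR_id2 {A B D : ob C} (f : hom B D) (k : hom A B) : whiskerR (id2 f) k = id2 (comp1 f k).
Proof. apply (hcomp_id2 HC). Qed.

Section PL.
Variables (A B L : ob C) (f : hom A B) (u : hom L A) (v : hom L B) (lam b : cell L B)
  (p : hom L A) (al : cell L A).
Hypotheses (Hpl : is_pseudolimit f u v lam) (Hb : is_inv lam b) (Hal : is_cell al u p)
  (Hali : invertible al) (Hfal : whiskerL f al = b).

Definition P {X : ob C} (g : hom X A) (a : cell X B) (m : hom X L) : Prop :=
  comp1 u m = g /\ comp1 v m = tgt a /\ is_inv a (whiskerR lam m).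

Lemma P_ex {X : ob C} {g : hom X A} {a : cell X B} : src a = comp1 f g -> invertible a -> exists m, P g a m.
Proof. intros e [c Hc]. destruct Hpl as [Hlc [Hli [H1 H2]]].
  destruct Hc as [c1 [c2 [c3 c4]]].
  destruct (H1 X g (tgt a) c) as [m [[e1 [e2 e3]] _]].
  - split; congruence.
  - exists a. apply inv_sym. repeat split; auto.
  - exists m. repeat split; auto; rewrite e3; auto. Qed.

Lemma P_uniq {X : ob C} {g : hom X A} {a : cell X B} {m m' : hom X L} : P g a m -> P g a m' -> m = m'.
Proof. intros [e1 [e2 e3]] [k1 [k2 k3]]. destruct Hpl as [[Hl1 Hl2] [Hli [H1 H2]]].
  destruct (H1 X g (tgt a) (whiskerR lam m)) as [m0 [_ U0]].
  - split. rewrite wR_src, Hl1; auto.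
    rewrite wR_tgt, Hl2, <- (comp1_assoc HC), e1; auto.
  - exists a. apply inv_sym; auto.
  - rewrite (U0 m), (U0 m'); auto. eapply inv_unique; eauto. Qed.

Definition Lc' : lift_choice A B := fun X g a =>
  match excluded_middle_informative (exists m, P g a m) with
  | left H => whiskerR al (proj1_sig (constructive_indefinite_description _ H))
  | right _ => id2 g
  end.
Arguments Lc' : clear implicits.

Lemma Lc'_eq {X : ob C} {g : hom X A} {a : cell X B} {m : hom X L} : P g a m -> Lc' X g a = whiskerR al m.
Proof. intro Hm. unfold Lc'. destruct (excluded_middle_informative _) as [H|H].
  - destruct (constructive_indefinite_description _ H) as [m0 Hm0]; simpl.
    f_equal. eapply P_uniq; eauto.
  - exfalso; eauto. Qed.

Lemma Lc'_lift {X : ob C} {g : hom X A} {a : cell X B} : src a = comp1 f g -> invertible a ->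
  src (Lc' X g a) = g /\ invertible (Lc' X g a) /\ whiskerL f (Lc' X g a) = a.
Proof. intros e ai. destruct (P_ex e ai) as [m Hm]. rewrite (Lc'_eq Hm).
  destruct Hm as [e1 [e2 e3]]. destruct Hal as [a1 a2]. repeat split.
  - rewrite wR_src, a1; auto.
  - destruct Hali as [c Hc]. exists (whiskerR c m). apply wR_inv. exact Hc.
  - rewrite wL_wR, Hfal. eapply inv_unique. apply wR_inv; exact Hb. apply inv_sym; exact e3. Qed.

Lemma Lc'_nat Y X (k : hom Y X) g a : src a = comp1 f g -> invertible a ->
  Lc' Y (comp1 g k) (whiskerR a k) = whiskerR (Lc' X g a) k.
Proof. intros e ai. destruct (P_ex e ai) as [m Hm]. rewrite (Lc'_eq Hm), wR_wR.
  apply Lc'_eq. destruct Hm as [e1 [e2 e3]]. split; [|split].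
  - rewrite (comp1_assoc HC), e1; auto.
  - rewrite (comp1_assoc HC), e2, wR_tgt; auto.
  - rewrite <- wR_wR. apply wR_inv; exact e3.
Qed.

Lemma Lc'_cleav : is_cleavage f Lc'.
Proof. split; intros; [apply Lc'_lift | apply Lc'_nat]; auto. Qed.

Lemma rep_iso : representable_isofibration f.
Proof. intros X g h a [ha1 ha2] ai. destruct (Lc'_lift ha1 ai) as [s [inv w]].
  exists (tgt (Lc' X g a)), (Lc' X g a). split; [split; auto|auto]. Qed.

Variables (i : hom A L).
Hypotheses (Hi1 : comp1 u i = id1 A) (Hi2 : whiskerR lam i = id2 f)
  (Hi3 : whiskerR al i = id2 (id1 A)).

Lemma normal_iso : normal_isofibration f.
Proof. split; [apply rep_iso|]. exists Lc'. split; [apply Lc'_cleav|].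
  intros X g h [e1 e2]. rewrite (src_id2 HC) in e1.
  assert (Hvi : comp1 v i = f).
  { pose proof (f_equal src Hi2) as H. rewrite wR_src, (src_id2 HC) in H.
    destruct Hpl as [[Hl1 _] _]. rewrite Hl1 in H. exact H. }
  rewrite (Lc'_eq (m := comp1 i g)).
  - rewrite <- wR_wR, Hi3, wR_id2, (comp1_id_l HC). reflexivity.
  - split; [|split].
    + rewrite (comp1_assoc HC), Hi1, (comp1_id_l HC). reflexivity.
    + rewrite (comp1_assoc HC), Hvi, (tgt_id2 HC). auto.
    + rewrite <- wR_wR, Hi2, wR_id2, <- e1. apply id_inv.
Qed.
End PL.
End Gen.

Section Fun.
Variables (C D : TwoCatData)
  (U : TwoFunctorData C D) (HU : IsTwoFunctor U).

Lemma F_inv {A B : ob C} {a b : cell A B} : is_inv a b -> is_inv (F2 U a) (F2 U b).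
Proof. intros [h1 [h2 [h3 h4]]]. unfold is_inv.
  rewrite !(F2_src HU), !(F2_tgt HU), h1, h2.
  repeat split; rewrite <- (F2_vcomp HU) by congruence;
  rewrite ?h3, ?h4, (F2_id HU); reflexivity. Qed.

Lemma F_invertible {A B : ob C} {a : cell A B} : invertible a -> invertible (F2 U a).
Proof. intros [b Hb]. exists (F2 U b). apply (F_inv Hb). Qed.

Lemma F_wR {A B E : ob C} (a : cell B E) (k : hom A B) :
  F2 U (whiskerR a k) = whiskerR (F2 U a) (F1 U k).
Proof. unfold whiskerR. rewrite (F2_hcomp HU), (F2_id HU). reflexivity. Qed.
Lemma F_wL {A B E : ob C} (f : hom B E) (a : cell A B) :
  F2 U (whiskerL f a) = whiskerL (F1 U f) (F2 U a).
Proof. unfold whiskerL. rewrite (F2_hcomp HU), (F2_id HU). reflexivity. Qed.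

Lemma F_equiv {A B : ob C} (f : hom A B) : equivalence f -> equivalence (F1 U f).
Proof. intros [g [eta [eps [[e1 e2] [ei [[k1 k2] epi]]]]]].
  exists (F1 U g), (F2 U eta), (F2 U eps). repeat split.
  - rewrite (F2_src HU), e1, (F1_id HU); reflexivity.
  - rewrite (F2_tgt HU), e2, (F1_comp HU); reflexivity.
  - apply F_invertible; auto.
  - rewrite (F2_src HU), k1, (F1_comp HU); reflexivity.
  - rewrite (F2_tgt HU), k2, (F1_id HU); reflexivity.
  - apply F_invertible; auto.
Qed.

Lemma F_retr {A B : ob C} (f : hom A B) : has_retraction f -> has_retraction (F1 U f).
Proof. intros [r e]. exists (F1 U r). rewrite <- (F1_comp HU), e, (F1_id HU). reflexivity. Qed.
Lemma F_sec {A B : ob C} (f : hom A B) : has_section f -> has_section (F1 U f).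
Proof. intros [r e]. exists (F1 U r). rewrite <- (F1_comp HU), e, (F1_id HU). reflexivity. Qed.
End Fun.

Theorem proposition3p15 (LL KK : TwoCat) (U : TwoFunctor LL KK) :
  has_pseudolimits_of_arrows LL ->
  has_pseudolimits_of_arrows KK ->
  preserves_pseudolimits_of_arrows U ->
  forall (A B : ob LL) (f : hom A B),
    (equivalence f -> equivalence (F1 U f)) /\
    (injective_equivalence f -> injective_equivalence (F1 U f)) /\
    (retract_equivalence f -> retract_equivalence (F1 U f)) /\
    (normal_retract_equivalence f -> normal_retract_equivalence (F1 U f)) /\
    (representable_isofibration f -> representable_isofibration (F1 U f)) /\
    (normal_isofibration f -> normal_isofibration (F1 U f)).
Proof.
  intros HL _ HP A B f.
  pose proof (tc_axioms LL) as HC. pose proof (tc_axioms KK) as HD.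
  pose proof (tf_axioms U) as HU.
  destruct (HL A B f) as [L [u [v [lam Hpl]]]].
  pose proof (HP A B f L u v lam Hpl) as Hpl'.
  destruct Hpl as [[Hl1 Hl2] [[b Hb] [H1 H2]]].
  assert (Hpl0 : is_pseudolimit f u v lam) by (split; [split; auto | split; [exists b; auto | auto]]).
  assert (Hb' : is_inv lam b) by exact Hb.
  assert (Hbc : is_cell b (comp1 f u) v) by (destruct Hb as [c1 [c2 _]]; split; congruence).
  assert (Hbi : invertible b) by (exists lam; apply inv_sym; auto).
  assert (NI : normal_isofibration f -> normal_isofibration (F1 U f)).
  { intros [_ [Lc [[Cl Cn] Nm]]].
    destruct (Cl L u b (proj1 Hbc) Hbi) as [a1 [ai af]].
    destruct (H1 A (id1 A) f (id2 f)) as [i [[i1 [i2 i3]] _]].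
    - split. apply (src_id2 HC). rewrite (tgt_id2 HC), (comp1_id_r HC). reflexivity.
    - exists (id2 f). apply (id_inv HC).
    - assert (Hbi2 : whiskerR b i = id2 f).
      { eapply (inv_unique HC). apply (wR_inv HC). exact Hb'. rewrite i3. apply (id_inv HC). }
      assert (Hai : whiskerR (Lc L u b) i = id2 (id1 A)).
      { rewrite <- Cn by (auto; exact (proj1 Hbc)). rewrite i1, Hbi2. apply Nm.
        split. rewrite (src_id2 HC), (comp1_id_r HC). reflexivity. apply (tgt_id2 HC). }
      eapply (normal_iso HD) with (i := F1 U i) (al := F2 U (Lc L u b)) (b := F2 U b)
        (p := F1 U (tgt (Lc L u b))).
      + exact Hpl'.
      + apply (F_inv HU). exact Hb'.
      + split. rewrite (F2_src HU), a1; reflexivity. apply (F2_tgt HU).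
      + apply (F_invertible HU); auto.
      + rewrite <- (F_wL HU), af. reflexivity.
      + rewrite <- (F1_comp HU), i1, (F1_id HU). reflexivity.
      + rewrite <- (F_wR HU), i3, (F2_id HU). reflexivity.
      + rewrite <- (F_wR HU), Hai, (F2_id HU), (F1_id HU). reflexivity. }
  assert (RI : representable_isofibration f -> representable_isofibration (F1 U f)).
  { intros Hr. destruct (Hr L u v b Hbc Hbi) as [h' [a' [[a1 a2] [ai af]]]].
    eapply (rep_iso HD) with (al := F2 U a') (b := F2 U b) (p := F1 U h').
    + exact Hpl'.
    + apply (F_inv HU). exact Hb'.
    + split. rewrite (F2_src HU), a1; reflexivity. rewrite (F2_tgt HU), a2; reflexivity.
    + apply (F_invertible HU); auto.
    + rewrite <- (F_wL HU), af. reflexivity. }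
  split; [|split; [|split; [|split; [|split]]]].
  - apply (F_equiv HU).
  - intros [e r]. split; [apply (F_equiv HU) | apply (F_retr HU)]; auto.
  - intros [e r]. split; [apply (F_equiv HU) | apply (F_sec HU)]; auto.
  - intros [[e r] n]. split; [split; [apply (F_equiv HU) | apply (F_sec HU)]|]; auto.
  - exact RI.
  - exact NI.
Qed.
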